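(* For all positive integers $k$, $\mathrm{opt}_{\mathrm{bs}}(k,2)\le \lceil k\ln k\rceil+2k$.
   Context: Let $F$ be a family of functions from a set $X$ to a set $Y$. Online learning of $F$ is a game between a learner and an adversary: the adversary secretly fixes some $f\in F$ and presents inputs $x_1,x_2,\dots\in X$ one at a time, chosen adaptively; after each input $x_t$ the learner guesses a value for $f(x_t)$. A mistake is an incorrect guess. In the standard model, after each guess the adversary reveals the true value $f(x_t)$; in the bandit model, the adversary only says YES (guess correct) or NO (guess incorrect). $\mathrm{opt}_{\mathrm{std}}(F)$ (resp. $\mathrm{opt}_{\mathrm{bs}}(F)$) is the maximum number of mistakes the learner makes in the standard (resp. bandit) model when both learner and adversary play optimally (the learner minimizing, the adversary maximizing, the adversary's answers required to be consistent with some $f\in F$). For positive integers $k,M$, $\mathrm{opt}_{\mathrm{bs}}(k,M)$ denotes the maximum of $\mathrm{opt}_{\mathrm{bs}}(F)$ over all families $F$ of functions (with arbitrary domain) with codomain $\{0,1,\dots,k-1\}$ and $\mathrm{opt}_{\mathrm{std}}(F)=M$. *)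

(* Defs.v *)
From Stdlib Require Import Reals.
From mathcomp Require Import all_boot.

Set Implicit Arguments.
Unset Strict Implicit.
Unset Printing Implicit Defensive.

(* A family of functions X -> {0,...,k-1}, given as a predicate on functions.
   It also serves as a "version space" (the functions still consistent). *)
Definition fam (X : Type) (k : nat) := (X -> 'I_k) -> Prop.

(* std_forces V m : in the STANDARD model, starting with version space V, the
   adversary has a strategy forcing at least m more mistakes, whatever the
   learner does.
   At the end the version space must be nonempty (answers consistent with some
   f in F). *)
Inductive std_forces (X : Type) (k : nat) : fam X k -> nat -> Prop :=
| std_done (V : fam X k) : (exists f, V f) -> std_forces V 0
| std_step (V : fam X k) (m : nat) (x : X) :
    (forall y : 'I_k, exists v : 'I_k,
        (exists f, V f /\ f x = v) /\
        ((v <> y /\ std_forces (fun f => V f /\ f x = v) m.-1) \/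
         (v = y /\ std_forces (fun f => V f /\ f x = v) m))) ->
    std_forces V m.

(* bs_forces V m : same in the BANDIT model: after the guess y the adversary
   only answers NO (a mistake; version space {f in V | f x <> y}) or YES
   (no mistake; version space {f in V | f x = y}). *)
Inductive bs_forces (X : Type) (k : nat) : fam X k -> nat -> Prop :=
| bs_done (V : fam X k) : (exists f, V f) -> bs_forces V 0
| bs_step (V : fam X k) (m : nat) (x : X) :
    (forall y : 'I_k,
        bs_forces (fun f => V f /\ f x <> y) m.-1 \/
        bs_forces (fun f => V f /\ f x = y) m) ->
    bs_forces V m.

Definition opt_std_eq (X : Type) (k : nat) (F : fam X k) (M : nat) : Prop :=
  std_forces F M /\ ~ std_forces F M.+1.

Definition opt_bs_le (X : Type) (k : nat) (F : fam X k) (N : nat) : Prop :=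
  ~ bs_forces F N.+1.

(* ceiling of a nonnegative real, as a nat: ceil r = - floor (- r) *)
Definition ceil_nat (r : R) : nat := Z.to_nat (- Int_part (- r))%Z.

(* Main.v *)
Require Import Defs.
From Stdlib Require Import Reals Classical List Lra Lia ZArith.
From mathcomp Require Import all_boot.
From mathcomp Require Import zify.

Set Implicit Arguments.
Unset Strict Implicit.
Unset Printing Implicit Defensive.

Fixpoint bs_ind2 (X : Type) (k : nat) (Pr : fam X k -> nat -> Prop)
  (Hd : forall V, (exists f, V f) -> Pr V 0)
  (Hs : forall V m x,
     (forall y : 'I_k,
        (bs_forces (fun f => V f /\ f x <> y) m.-1 /\ Pr (fun f => V f /\ f x <> y) m.-1) \/
        (bs_forces (fun f => V f /\ f x = y) m /\ Pr (fun f => V f /\ f x = y) m)) ->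
     Pr V m)
  (V : fam X k) (m : nat) (H : bs_forces V m) {struct H} : Pr V m :=
  match H in bs_forces V0 m0 return Pr V0 m0 with
  | bs_done V0 h => Hd V0 h
  | bs_step V0 m0 x h => Hs V0 m0 x (fun y =>
      match h y with
      | or_introl h1 => or_introl (conj h1 (bs_ind2 Hd Hs h1))
      | or_intror h2 => or_intror (conj h2 (bs_ind2 Hd Hs h2))
      end)
  end.

Fixpoint std_ind2 (X : Type) (k : nat) (Pr : fam X k -> nat -> Prop)
  (Hd : forall V, (exists f, V f) -> Pr V 0)
  (Hs : forall V m x,
     (forall y : 'I_k, exists v : 'I_k,
        (exists f, V f /\ f x = v) /\
        ((v <> y /\ std_forces (fun f => V f /\ f x = v) m.-1 /\ Pr (fun f => V f /\ f x = v) m.-1) \/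
         (v = y /\ std_forces (fun f => V f /\ f x = v) m /\ Pr (fun f => V f /\ f x = v) m))) ->
     Pr V m)
  (V : fam X k) (m : nat) (H : std_forces V m) {struct H} : Pr V m :=
  match H in std_forces V0 m0 return Pr V0 m0 with
  | std_done V0 h => Hd V0 h
  | std_step V0 m0 x h => Hs V0 m0 x (fun y =>
      match h y with
      | ex_intro v (conj hv (or_introl (conj a b))) =>
          ex_intro _ v (conj hv (or_introl (conj a (conj b (std_ind2 Hd Hs b)))))
      | ex_intro v (conj hv (or_intror (conj a b))) =>
          ex_intro _ v (conj hv (or_intror (conj a (conj b (std_ind2 Hd Hs b)))))
      end)
  end.

Lemma std_mono (X : Type) (k : nat) (V : fam X k) m :
  std_forces V m -> forall W : fam X k, (forall f, V f -> W f) -> std_forces W m.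
Proof.
move=> H; pattern V, m; apply: (std_ind2 _ _ H) => {V m H}.
- move=> V [f Hf] W HW; apply: std_done; exists f; exact: HW.
- move=> V m x IH W HW; apply: (std_step (x := x)) => y.
  have [v [[f [Hf Hfx]] Hc]] := IH y.
  exists v; split; first by exists f; split => //; exact: HW.
  case: Hc => [[Hv [_ Hp]]|[Hv [_ Hp]]].
  + left; split => //; apply: Hp => g [Hg Hgx]; split => //; exact: HW.
  + right; split => //; apply: Hp => g [Hg Hgx]; split => //; exact: HW.
Qed.

Lemma std_nonempty (X : Type) (k : nat) (hk : 0 < k) (V : fam X k) m :
  std_forces V m -> exists f, V f.
Proof.
case => [V0 h|V0 m0 x h] //.
have [v [[f [Hf _]] _]] := h (Ordinal hk); by exists f.
Qed.

Lemma bs_nonempty (X : Type) (k : nat) (hk : 0 < k) (V : fam X k) m :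
  bs_forces V m -> exists f, V f.
Proof.
move=> H; pattern V, m; apply: (bs_ind2 _ _ H) => {V m H} //.
move=> V m x IH; case: (IH (Ordinal hk)) => [[_ [f [Hf _]]]|[_ [f [Hf _]]]]; by exists f.
Qed.

Lemma std_two (X : Type) (k : nat) (hk : 0 < k) (V : fam X k) (x : X) (u w : 'I_k) d :
  u <> w ->
  std_forces (fun f => V f /\ f x = u) d ->
  std_forces (fun f => V f /\ f x = w) d ->
  std_forces V d.+1.
Proof.
move=> Huw Hu Hw; apply: (std_step (x := x)) => y.
have [fu Hfu] := std_nonempty hk Hu.
have [fw Hfw] := std_nonempty hk Hw.
case: (eqVneq y u) => Hy.
- exists w; split; first by exists fw.
  left; split => //; by rewrite Hy => E; apply: Huw.
- exists u; split; first by exists fu.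
  left; split => //; by move=> E; rewrite E eqxx in Hy.
Qed.

Definition D0 (X : Type) (k : nat) (Q : fam X k) :=
  forall f g, Q f -> Q g -> forall z, f z = g z.

Lemma notstd1_D0 (X : Type) (k : nat) (Q : fam X k) :
  ~ std_forces Q 1 -> D0 Q.
Proof.
move=> H f g Hf Hg z; apply: NNPP => Hne; apply: H.
apply: (std_step (x := z)) => y.
case: (eqVneq (f z) y) => Hy.
- exists (g z); split; first by exists g.
  left; split; first by move=> E; apply: Hne; rewrite Hy E.
  apply: std_done; by exists g.
- exists (f z); split; first by exists f.
  left; split; first by move=> E; rewrite E eqxx in Hy.
  apply: std_done; by exists f.
Qed.

Lemma In_filter (A : Type) (p : pred A) (l : seq A) a :
  List.In a (filter p l) <-> List.In a l /\ p a.
Proof.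
elim: l => [|b l IH] /=; first by split => [[]|[]].
case Hp: (p b) => /=.
- split.
  + case=> [<-|/IH [H1 H2]]; [by split; [left|]| by split; [right|]].
  + case=> [[->|H1] H2]; [by left| by right; apply/IH; split].
- split.
  + move=> H; have [H1 H2] := proj1 IH H; split; [by right|done].
  + case=> [[E|H1] H2]; [by rewrite E H2 in Hp| exact: (proj2 IH)].
Qed.

Lemma In_cat (A : Type) (l1 l2 : seq A) a :
  List.In a (l1 ++ l2) <-> List.In a l1 \/ List.In a l2.
Proof.
elim: l1 => [|b l IH] /=; first by split => [H|[[]|H]]; [right|].
have := IH; tauto.
Qed.

Lemma In_map (A B : Type) (g : A -> B) (l : seq A) b :
  List.In b (map g l) <-> exists a, List.In a l /\ b = g a.
Proof.
elim: l => [|c l IH] /=; first by split => [[]|[a [[] _]]].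
split.
- case=> [<-|/IH [a [H1 H2]]]; [by exists c; split; [left|]| by exists a; split; [right|]].
- case=> a [[E|H1] H2]; [by left; rewrite H2 E| by right; apply/IH; exists a].
Qed.

Lemma In_mem (T : eqType) (l : seq T) a : List.In a l <-> a \in l.
Proof.
elim: l => [|b l IH] /=; first by split.
rewrite in_cons; split.
- case=> [->|/IH ->]; [by rewrite eqxx| by rewrite orbT].
- case/orP => [/eqP ->|/IH H]; [by left| by right].
Qed.

Lemma reps (X : Type) (k : nat) (L : seq 'I_k) (Q : 'I_k -> fam X k) :
  (forall v, v \in L -> D0 (Q v)) ->
  exists fs : seq (X -> 'I_k), size fs <= size L /\
    forall v f, v \in L -> Q v f -> exists g, List.In g fs /\ forall z, f z = g z.
Proof.
elim: L => [|v L IH] HD /=.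
  by exists [::]; split => // v f.
have [fs [Hs Hc]] : exists fs : seq (X -> 'I_k), size fs <= size L /\
    forall v f, v \in L -> Q v f -> exists g, List.In g fs /\ forall z, f z = g z.
  by apply: IH => w Hw; apply: HD; rewrite in_cons Hw orbT.
case: (classic (exists f, Q v f)) => [[f0 Hf0]|Hn].
- exists (f0 :: fs); split => //= w f; rewrite in_cons => /orP [/eqP ->|Hw] Hf.
  + exists f0; split; first by left.
    apply: (HD v) => //; by rewrite in_cons eqxx.
  + have [g [Hg Hfg]] := Hc w f Hw Hf; exists g; split => //; by right.
- exists fs; split; first by apply: leqW.
  move=> w f; rewrite in_cons => /orP [/eqP ->|Hw] Hf.
  + by exfalso; apply: Hn; exists f.
  + exact: (Hc w f Hw Hf).
Qed.

Lemma sum_count_lab (T : Type) (k : nat) (lab : T -> 'I_k) (s : seq T) :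
  \sum_(y < k) count (fun t => lab t == y) s = size s.
Proof.
elim: s => [|t s IH] /=; first by rewrite big1.
rewrite big_split /= IH -add1n; congr (_ + _).
rewrite (bigD1 (lab t)) //= eqxx big1 // => i Hi.
by rewrite eq_sym (negbTE Hi).
Qed.

Lemma pigeon (T : Type) (k : nat) (hk : 0 < k) (lab : T -> 'I_k) (s : seq T) :
  exists y : 'I_k, size s <= k * count (fun t => lab t == y) s.
Proof.
case: (boolP [exists y : 'I_k, size s <= k * count (fun t => lab t == y) s]).
  by move/existsP.
rewrite negb_exists => /forallP H; exfalso.
have H1 : \sum_(y < k) (k * count (fun t => lab t == y) s) <= \sum_(y < k) (size s).-1.
  apply: leq_sum => y _; have := H y; rewrite -ltnNge; case: (size s) => //.
have := H1; rewrite -big_distrr /= sum_count_lab sum_nat_const card_ord.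
case E: (size s) => [|n] /=; last by lia.
by move=> _; have := H (Ordinal hk); rewrite E.
Qed.

Definition cov_fs (X : Type) (k : nat) (V : fam X k) (fs : seq (X -> 'I_k)) :=
  forall f, V f -> exists g, List.In g fs /\ forall z, f z = g z.

Definition cov (X : Type) (k : nat) (V : fam X k) (ps : seq (fam X k)) (fs : seq (X -> 'I_k)) :=
  forall f, V f -> (exists P, List.In P ps /\ P f) \/ (exists g, List.In g fs /\ forall z, f z = g z).

Lemma size_filter_neq (X : Type) (k : nat) (fs : seq (X -> 'I_k)) x y :
  size (filter (fun g => g x != y) fs) + count (fun g => g x == y) fs = size fs.
Proof.
elim: fs => [|g fs IH] //=.
by case: (g x == y); rewrite /= -IH ?add1n ?add0n ?addnS ?addSn.
Qed.

Lemma S1 (X : Type) (k : nat) (hk : 0 < k) (V : fam X k) m :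
  bs_forces V m -> forall fs, cov_fs V fs -> m < size fs.
Proof.
move=> H; pattern V, m; apply: (bs_ind2 _ _ H) => {V m H}.
- move=> V [f Hf] fs Hc; have [g [Hg _]] := Hc f Hf.
  by case: fs Hg Hc.
- move=> V m x IH fs Hc.
  case: fs Hc => [|g0 rest] Hc.
  + exfalso; case: (IH (Ordinal hk)) => [[Hb _]|[Hb _]];
    have [f [Hf _]] := bs_nonempty hk Hb; by have [g [[] _]] := Hc f Hf.
  + case: (IH (g0 x)) => [[_ Hp]|[_ Hp]].
    * have : m.-1 < size (filter (fun g => g x != g0 x) (g0 :: rest)).
        apply: Hp => f [Hf Hfx]; have [g [Hg Hfg]] := Hc f Hf.
        exists g; split => //; apply/In_filter; split => //.
        by apply/eqP; rewrite -Hfg.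
      rewrite /= eqxx /= => Hlt.
      have Hle : size (filter (fun g => g x != g0 x) rest) <= size rest.
        by rewrite size_filter count_size.
      move: (leq_trans Hlt Hle); lia.
    * apply: Hp => f [Hf _]; exact: Hc.
Qed.

Lemma arith1 k s c s' j :
  0 < k -> k < s -> s <= k * c -> s' + c = s ->
  s * (k.-1) ^ j.+1 <= k ^ j.+2 -> s' * (k.-1) ^ j <= k ^ j.+1.
Proof.
move=> hk hs hc hs' H.
have H1 : k * s' <= k.-1 * s by nia.
rewrite -(leq_pmul2l hk) mulnA.
apply: (leq_trans (leq_mul H1 (leqnn _))).
rewrite -mulnA (mulnC s) mulnA -expnS mulnC.
by rewrite -expnS.
Qed.

Lemma S2 (X : Type) (k : nat) (hk : 0 < k) (V : fam X k) m :
  bs_forces V m -> forall fs j, cov_fs V fs -> size fs * (k.-1) ^ j <= k ^ j.+1 ->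
  m <= j + k.-1.
Proof.
move=> H; pattern V, m; apply: (bs_ind2 _ _ H) => {V m H}.
- by move=> *.
- move=> V m x IH fs j Hc Hcond.
  case: (leqP (size fs) k) => Hs.
  + have Hb : bs_forces V m.
      apply: (bs_step (x := x)) => y; case: (IH y) => [[Hb _]|[Hb _]]; [left|right]; exact Hb.
    have := S1 hk Hb Hc; lia.
  + case: j Hcond => [|j] Hcond.
      by rewrite expn0 muln1 expn1 in Hcond; lia.
    have [y Hy] := pigeon hk (fun g : X -> 'I_k => g x) fs.
    case: (IH y) => [[_ Hp]|[_ Hp]].
    * have : m.-1 <= j + k.-1.
        apply: (Hp (filter (fun g => g x != y) fs)).
        - move=> f [Hf Hfx]; have [g [Hg Hfg]] := Hc f Hf.
          exists g; split => //; apply/In_filter; split => //.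
          by apply/eqP; rewrite -Hfg.
        - apply: (arith1 hk Hs Hy (size_filter_neq fs x y) Hcond).
      lia.
    * apply: (Hp fs j.+1 _ Hcond) => f [Hf _]; exact: Hc.
Qed.

Lemma mem_rem_ord k (y u : 'I_k) : (u \in rem y (enum 'I_k)) = (u != y).
Proof. by rewrite (mem_rem_uniq _ (enum_uniq _)) inE mem_enum andbT. Qed.

Lemma size_rem_ord k (y : 'I_k) : size (rem y (enum 'I_k)) = k.-1.
Proof. by rewrite size_rem ?mem_enum // size_enum_ord. Qed.

Lemma LP (X : Type) (k : nat) (hk : 0 < k) (a : nat) :
  forall (V : fam X k) m, bs_forces V m ->
  forall ps fs j, size ps = a -> (forall P, List.In P ps -> ~ std_forces P 2) ->
  cov V ps fs -> (k * a + size fs) * (k.-1) ^ j <= k ^ j.+1 ->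
  m <= a + j + k.-1.
Proof.
elim: a => [|a IHa].
- move=> V m Hb ps fs j Hs _ Hc Hcond.
  case: ps Hs Hc => // _ Hc.
  apply: (S2 hk Hb (fs := fs)); last by rewrite muln0 add0n in Hcond.
  move=> f Hf; case: (Hc f Hf) => [[P [[] _]]|//].
- move=> V m H; pattern V, m; apply: (bs_ind2 _ _ H) => {V m H}; first by move=> *.
  move=> V m x IH ps fs j Hs HD Hc Hcond.
  case: ps Hs HD Hc => [//|P0 rest] /= [Hs] HD Hc.
  have HD0 : ~ std_forces P0 2 by apply: HD; left.
  case: (classic (exists y, std_forces (fun f => P0 f /\ f x = y) 1)) => [[y Hy]|Hn].
  + have Hl : forall v, v \in rem y (enum 'I_k) -> D0 (fun f => P0 f /\ f x = v).
      move=> v; rewrite mem_rem_ord => Hv; apply: notstd1_D0 => Hv1; apply: HD0.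
      apply: (std_two hk (x := x) (u := y) (w := v)) => //.
      by move=> E; rewrite E eqxx in Hv.
    have [R [HR HRc]] := reps Hl.
    rewrite size_rem_ord in HR.
    case: (IH y) => [[Hb _]|[_ Hp]].
    * have : m.-1 <= a + j + k.-1.
        apply: (IHa _ _ Hb rest (R ++ fs) j Hs).
        - by move=> P HP; exact: (HD P (or_intror HP)).
        - move=> f [Hf Hfx]; case: (Hc f Hf) => [[P [HP HPf]]|[g [Hg Hfg]]]; first (case: HP => [E|HP]; first subst P).
          + right; have Hm : f x \in rem y (enum 'I_k) by rewrite mem_rem_ord; apply/eqP.
            have [g [Hg Hfg]] := HRc (f x) f Hm (conj HPf erefl).
            by exists g; split => //; apply/In_cat; left.
          + by left; exists P.
          + by right; exists g; split => //; apply/In_cat; right.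
        - rewrite size_cat; apply: leq_trans Hcond; apply: leq_mul => //; lia.
      lia.
    * apply: (Hp (map (fun P f => P f /\ f x = y) (P0 :: rest)) fs j).
      - by rewrite size_map /= Hs.
      - move=> P' /In_map [P [HP ->]] HP'; apply: (HD P HP).
        by apply: (std_mono HP') => f [].
      - move=> f [Hf Hfx]; case: (Hc f Hf) => [[P [HP HPf]]|[g Hg]]; last by right; exists g.
        left; exists (fun f => P f /\ f x = y); split => //; apply/In_map; by exists P.
      - exact: Hcond.
  + have Hl : forall v, v \in enum 'I_k -> D0 (fun f => P0 f /\ f x = v).
      move=> v _; apply: notstd1_D0 => Hv1; apply: Hn; by exists v.
    have [R [HR HRc]] := reps Hl.
    rewrite size_enum_ord in HR.
    have Hb : bs_forces V m.
      apply: (bs_step (x := x)) => y; case: (IH y) => [[Hb _]|[Hb _]]; [left|right]; exact Hb.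
    have : m <= a + j + k.-1.
      apply: (IHa _ _ Hb rest (R ++ fs) j Hs).
      - by move=> P HP; exact: (HD P (or_intror HP)).
      - move=> f Hf; case: (Hc f Hf) => [[P [HP HPf]]|[g [Hg Hfg]]]; first (case: HP => [E|HP]; first subst P).
        + right; have Hm : f x \in enum 'I_k by rewrite mem_enum.
          have [g [Hg Hfg]] := HRc (f x) f Hm (conj HPf erefl).
          by exists g; split => //; apply/In_cat; left.
        + by left; exists P.
        + by right; exists g; split => //; apply/In_cat; right.
      - rewrite size_cat; apply: leq_trans Hcond; apply: leq_mul => //; lia.
    lia.
Qed.

Lemma LD2 (X : Type) (k : nat) (hk : 0 < k) (j : nat) (Hj : k * k * (k.-1) ^ j <= k ^ j.+1) :
  forall (V : fam X k) m, bs_forces V m ->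
  forall W : fam X k, (forall f, V f -> W f) -> ~ std_forces W 3 ->
  m <= j + 2 * k - 1.
Proof.
move=> V m H; pattern V, m; apply: (bs_ind2 _ _ H) => {V m H}; first by move=> *.
move=> V m x IH W HVW HW.
case: (classic (exists H, std_forces (fun f => W f /\ f x = H) 2)) => [[H0 HH]|Hn].
- case: (IH H0) => [[Hb _]|[_ Hp]].
  + have : m.-1 <= k.-1 + j + k.-1.
      apply: (LP hk Hb (ps := map (fun u f => W f /\ f x = u) (rem H0 (enum 'I_k))) (fs := [::])).
      * by rewrite size_map size_rem_ord.
      * move=> P' /In_map [u [Hu ->]] Hu2; apply: HW.
        apply: (std_two hk (x := x) (u := H0) (w := u)) => //.
        move: Hu => /In_mem; rewrite mem_rem_ord => Hu E; by rewrite E eqxx in Hu.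
      * move=> f [Hf Hfx]; left; exists (fun g => W g /\ g x = f x); split; last by split => //; apply: HVW.
        apply/In_map; exists (f x); split => //; apply/In_mem; rewrite mem_rem_ord; exact/eqP.
      * rewrite addn0; apply: leq_trans Hj; apply: leq_mul => //; apply: leq_mul => //; lia.
    lia.
  + apply: (Hp (fun f => W f /\ f x = H0)).
    * by move=> f [Hf ->]; split => //; apply: HVW.
    * by move=> H3; apply: HW; apply: (std_mono H3) => f [].
- have Hb : bs_forces V m.
    apply: (bs_step (x := x)) => y; case: (IH y) => [[Hb _]|[Hb _]]; [left|right]; exact Hb.
  have : m <= k + j + k.-1.
    apply: (LP hk Hb (ps := map (fun u f => W f /\ f x = u) (enum 'I_k)) (fs := [::])).
    * by rewrite size_map size_enum_ord.
    * move=> P' /In_map [u [Hu ->]] Hu2; apply: Hn; by exists u.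
    * move=> f Hf; left; exists (fun g => W g /\ g x = f x); split; last by split => //; apply: HVW.
      apply/In_map; exists (f x); split => //; apply/In_mem; by rewrite mem_enum.
    * by rewrite addn0.
  lia.
Qed.

Local Open Scope R_scope.
Lemma expn_pow m n : (m ^ n)%N = Nat.pow m n :> nat.
Proof. elim: n => [|n IH] //; by rewrite expnS IH /= -multE. Qed.

Lemma ceil_ge (t : R) : (t <= INR (ceil_nat t)).
Proof.
rewrite /ceil_nat.
have [H1 _] := base_Int_part (- t).
set z := (- Int_part (- t))%Z.
have Hz : (t <= IZR z) by rewrite /z opp_IZR; lra.
case: (Z_le_gt_dec 0 z) => Hz0.
- by rewrite INR_IZR_INZ Z2Nat.id.
- have := pos_INR (Z.to_nat z); have : (IZR z < 0) by apply: IZR_lt; lia.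
  lra.
Qed.

Lemma exp_pow_mul (a : R) (j : nat) : (exp a ^ j = exp (INR j * a)).
Proof.
elim: j => [|j IH]; first by rewrite /= Rmult_0_l exp_0.
rewrite -[exp a ^ j.+1]/(exp a * exp a ^ j) IH -exp_plus S_INR; congr exp; ring.
Qed.

Lemma real_bound (k : nat) (hk : (0 < k)%N) :
  (k * k * (k.-1) ^ (ceil_nat (Rmult (INR k) (ln (INR k)))) <= k ^ (ceil_nat (Rmult (INR k) (ln (INR k)))).+1)%N.
Proof.
have := ceil_ge (INR k * ln (INR k)).
move: (ceil_nat (INR k * ln (INR k))) => j Hj.
have Hmain : (k * (k.-1) ^ j <= k ^ j)%N.
  apply/leP; apply: INR_le.
  rewrite !expn_pow -multE mult_INR !pow_INR.
  case: k hk Hj => [//|k'] _ Hj.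
  rewrite -[k'.+1.-1]/k'.
  set K := INR k'.+1 in Hj *.
  have HK : (INR k' = K - 1) by rewrite /K S_INR; ring.
  have HK1 : (1 <= K) by rewrite /K S_INR; have := pos_INR k'; lra.
  have HKp : (0 < K) by lra.
  set r := (1 - / K).
  have Hr : (INR k' = K * r) by rewrite HK /r; field; lra.
  have Hr0 : (0 <= r).
    rewrite /r; have : (/ K <= 1).
      rewrite -Rinv_1; apply: Rinv_le_contravar; lra.
    lra.
  have Hre : (r <= exp (- / K)) by have := exp_ineq1_le (- / K); rewrite /r; lra.
    have Hrj : (r ^ j <= / K).
    apply: (Rle_trans _ (exp (- / K) ^ j)); first by apply: pow_incr; split.
    rewrite exp_pow_mul.
    have E : exp (- ln K) = / K by rewrite exp_Ropp exp_ln.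
    apply: (Rle_trans _ (exp (- ln K))); last by rewrite E; right.
    have H2 : ln K <= INR j * / K.
      apply (Rmult_le_reg_l K _ _ HKp).
      rewrite (_ : K * (INR j * / K) = INR j); [exact Hj | field; lra].
    have Hle : INR j * - / K <= - ln K.
      rewrite -Ropp_mult_distr_r; lra.
    case: Hle => [Hlt|->]; [left; exact: exp_increasing | right; reflexivity].
  rewrite Hr Rpow_mult_distr -Rmult_assoc (Rmult_comm K (K ^ j)) Rmult_assoc.
  rewrite -[X in (_ <= X)]Rmult_1_r.
  apply: Rmult_le_compat_l; first by apply: pow_le; lra.
  have := Rmult_le_compat_l K _ _ (Rlt_le _ _ HKp) Hrj.
  rewrite Rinv_r; lra.
by rewrite expnS -mulnA; apply: leq_mul.
Qed.

Local Close Scope R_scope.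
Unset Implicit Arguments.

Theorem mainTheorem3 (k : nat) (hk : 0 < k) (X : Type) (F : fam X k) :
  opt_std_eq F 2 ->
  opt_bs_le F (ceil_nat (Rmult (INR k) (ln (INR k))) + 2 * k).
Proof.
move=> [_ H3] Hb.
have := LD2 hk (real_bound hk) Hb (W := F) (fun f Hf => Hf) H3.
lia.
Qed.
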